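(* Let $G$ and $H$ be finite abelian groups, written additively, of the same even order $k$, and let $f:G\to H$ be semi-planar. Suppose $S(G,H;f)$ splits into two substructures $S_1$ and $S_2$ with $\mathcal{L}(0,0)\in S_1$, and let $B=\{b\in H : \mathcal{L}(0,b)\in S_1\}$ (a subgroup of $H$ of index $2$). Then for any $h\in H\setminus B$, the mapping $\phi_h:G\times H\to G\times H$, $\phi_h(x,y)=(x,y+h)$ (together with the induced map on lines $\mathcal{L}(a,b)\mapsto\mathcal{L}(a,b+h)$), is an isomorphism between the two substructures $S_1$ and $S_2$.
   Context: A function $f:G\to H$ is semi-planar if for every non-identity $a\in G$ and every $y\in H$, the equation $f(x+a)-f(x)=y$ has either $0$ or $2$ solutions $x\in G$. The incidence structure $S(G,H;f)$ has points $(x,y)\in G\times H$ and lines $\mathcal{L}(a,b)$ for $(a,b)\in G\times H$, with $(x,y)$ incident with $\mathcal{L}(a,b)$ iff $y=f(x-a)+b$. Its incidence graph is the bipartite graph on points and lines with an edge for each incident pair. $S(G,H;f)$ splits into two substructures $S_1,S_2$ if its incidence graph has exactly two connected components; $S_1,S_2$ are the incidence structures formed by the points and lines of the two components, and $\mathcal{L}(a,b)\in S_i$ means the line lies in component $S_i$. *)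

(* Defs.v *)
From HB Require Import structures.
From mathcomp Require Import all_boot all_order all_algebra.
Set Implicit Arguments. Unset Strict Implicit. Unset Printing Implicit Defensive.
Import GRing.Theory.
Local Open Scope ring_scope.

Definition semi_planar (G H : finZmodType) (f : G -> H) : Prop :=
  forall (a : G) (y : H), a != 0 ->
    let n := #|[set x : G | f (x + a) - f x == y]| in (n = 0%N \/ n = 2%N).

(* Incidence in S(G,H;f): point (x,y) on line L(a,b) iff y = f(x-a) + b. *)
Definition incident (G H : finZmodType) (f : G -> H) (p l : G * H) : bool :=
  p.2 == f (p.1 - l.1) + l.2.

(* Vertices of the incidence graph: inl p = point p, inr l = line L(l). *)
Definition ivert (G H : finZmodType) : finType := ((G * H) + (G * H))%type.

Definition iadj (G H : finZmodType) (f : G -> H) : rel (ivert G H) :=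
  fun u v => match u, v with
             | inl p, inr l => incident f p l
             | inr l, inl p => incident f p l
             | _, _ => false
             end.

Definition icomp (G H : finZmodType) (f : G -> H) (v : ivert G H) : {set ivert G H} :=
  [set w | connect (iadj f) v w].

(* S(G,H;f) splits into two substructures: the incidence graph has exactly
   two connected components. *)
Definition splits_in_two (G H : finZmodType) (f : G -> H) : Prop :=
  #|[set icomp f v | v : ivert G H]| = 2%N.

Definition S1 (G H : finZmodType) (f : G -> H) : {set ivert G H} :=
  icomp f (inr (0, 0)).
Definition S2 (G H : finZmodType) (f : G -> H) : {set ivert G H} :=
  ~: S1 f.

Definition Bset (G H : finZmodType) (f : G -> H) : {set H} :=
  [set b : H | (inr (0, b) : ivert G H) \in S1 f].

Definition phi (G H : finZmodType) (h : H) (v : ivert G H) : ivert G H :=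
  match v with
  | inl p => inl (p.1, p.2 + h)
  | inr l => inr (l.1, l.2 + h)
  end.

(* Main.v *)
Require Import Defs.
From HB Require Import structures.
From mathcomp Require Import all_boot all_order all_algebra.
Import GRing.Theory.
Local Open Scope ring_scope.

Lemma connect_hom (T : finType) (e : rel T) (g : T -> T) :
  (forall u v, e u v -> e (g u) (g v)) ->
  forall u v, connect e u v -> connect e (g u) (g v).
Proof.
move=> He u v /connectP [p pth ->].
elim: p u pth => [|w p IH] u /=; first by rewrite connect0.
case/andP=> ew pw.
exact: connect_trans (connect1 (He _ _ ew)) (IH _ pw).
Qed.

Lemma phi_adj (G H : finZmodType) (f : G -> H) (h : H) u v :
  iadj f u v = iadj f (phi h u) (phi h v).
Proof.
case: u => [[x y]|[a b]]; case: v => [[x' y']|[a' b']] //=;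
by rewrite /incident /= addrA (inj_eq (addIr h)).
Qed.

Lemma phiK (G H : finZmodType) (h : H) : cancel (phi (G:=G) h) (phi (-h)).
Proof. by case=> [[x y]|[a b]] /=; rewrite addrK. Qed.

Lemma phi_connect (G H : finZmodType) (f : G -> H) (h : H) u v :
  connect (iadj f) u v = connect (iadj f) (phi h u) (phi h v).
Proof.
apply/idP/idP; first by apply: connect_hom => a b; rewrite -phi_adj.
move/(@connect_hom _ (iadj f) (phi (-h))).
rewrite !phiK; apply => a b; by rewrite -phi_adj.
Qed.

Theorem corollary1 (G H : finZmodType) (k : nat) (f : G -> H) (h : H) :
  #|G| = k -> #|H| = k -> ~~ odd k ->
  semi_planar f ->
  splits_in_two f ->
  h \notin Bset f ->
  [/\ bijective (phi (G:=G) h),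
      (forall v : ivert G H, (v \in S1 f) = (phi h v \in S2 f)),
      (forall p l : G * H,
          incident f p l = incident f (p.1, p.2 + h) (l.1, l.2 + h)) &
      (forall u v : ivert G H, iadj f u v = iadj f (phi h u) (phi h v))].
Proof.
move=> _ _ _ _ Hsplit hB.
have csym : connect_sym (iadj f).
  apply: sym_connect_sym => u v.
  by case: u => [[x y]|[a b]]; case: v => [[x' y']|[a' b']].
set w := (inr (0, h) : ivert G H).
have wS1 : w \notin S1 f by move: hB; rewrite /Bset inE.
set C := icomp f w.
have wC : w \in C by rewrite inE connect0.
have SC : S1 f != C by apply/eqP => E; move: wS1; rewrite E wC.
have Hall : forall v, (v \in S1 f) || (v \in C).
  move=> v.
  set A := [set icomp f v0 | v0 : ivert G H].
  have S1A : S1 f \in A by apply/imsetP; exists (inr (0,0)).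
  have CA : C \in A by apply/imsetP; exists w.
  have vA : icomp f v \in A by apply/imsetP; exists v.
  have sub : [set S1 f; C] \subset A by apply/subsetP => X; rewrite !inE => /orP[]/eqP->.
  have : [set S1 f; C] = A.
    apply/eqP; rewrite eqEcard sub /= cards2 SC (Hsplit) //.
  have vv : v \in icomp f v by rewrite inE connect0.
  move=> EA; move: vA; rewrite -EA !inE => /orP[]/eqP E.
    by move: vv; rewrite E inE => ->.
  by move: vv; rewrite E inE => ->; rewrite orbT.
have Hdisj : forall v, v \in S1 f -> v \in C -> False.
  move=> v; rewrite /S1 /C !inE => a b.
  move: wS1; rewrite /S1 inE.
  by rewrite (connect_trans a) // csym.
have phiS1 : forall v, (v \in S1 f) = (phi h v \in C).
  move=> v; rewrite /S1 /C !inE.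
  by rewrite (@phi_connect _ _ f h) /= add0r.
split.
- exists (phi (-h)); first exact: phiK.
  by move=> v; have := @phiK G H (-h) v; rewrite opprK.
- move=> v; rewrite /S2 in_setC phiS1.
  have := Hall (phi h v); have := Hdisj (phi h v).
  by case: (phi h v \in C); case: (phi h v \in S1 f) => // /(_ erefl erefl).
- by move=> [x y] [a b]; rewrite /incident /= addrA (inj_eq (addIr h)).
- exact: phi_adj.
Qed.
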